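(* Let $\underline{E}=(E_p)_{p\in\mathbb{P}}$ with $E_p\subseteq\overline{\mathbb{Z}_p}$ for each prime $p$. Then $$\mathrm{Pic}\big(\textnormal{Int}_{\mathbb{Q}}(\underline{E},\overline{\widehat{\mathbb{Z}}})\big)\cong\bigoplus_{p\in\mathbb{P}}\mathrm{Pic}\big(\textnormal{Int}_{\mathbb{Q}}(E_p,\overline{\mathbb{Z}_p})\big).$$
   Context: $\mathbb{P}$ is the set of primes; $\overline{\mathbb{Z}_p}$ is the integral closure of $\mathbb{Z}_p$ in a fixed algebraic closure of $\mathbb{Q}_p$. $\textnormal{Int}_{\mathbb{Q}}(E_p,\overline{\mathbb{Z}_p})=\{f\in\mathbb{Q}[X]\mid f(E_p)\subseteq\overline{\mathbb{Z}_p}\}$ and $\textnormal{Int}_{\mathbb{Q}}(\underline{E},\overline{\widehat{\mathbb{Z}}})=\bigcap_p\textnormal{Int}_{\mathbb{Q}}(E_p,\overline{\mathbb{Z}_p})$ (components may be empty). For an integral domain $D$, $\mathrm{Pic}(D)$ is the group of invertible fractional ideals modulo nonzero principal fractional ideals. *)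

(* Defs.v *)
From HB Require Import structures.
From mathcomp Require Import all_boot all_order all_algebra.
From mathcomp Require Import boolp.
Set Implicit Arguments. Unset Strict Implicit. Unset Printing Implicit Defensive.
Import Order.TTheory GRing.Theory Num.Theory.
Local Open Scope ring_scope.

Definition zp_base (p : nat) : nat := p.-2.+2.
Definition zp_mod (p n : nat) : int := ((zp_base p) ^ n)%N%:Z.
Definition zp_coh (p : nat) (x : nat -> int) : Prop :=
  forall n : nat, x n = modz (x n.+1) (zp_mod p n).
Definition Zpadic (p : nat) : Type := {x : nat -> int | zp_coh p x}.

HB.instance Definition _ (p : nat) := gen_eqMixin (Zpadic p).
HB.instance Definition _ (p : nat) := gen_choiceMixin (Zpadic p).

Lemma zp_modS (p n : nat) (a : int) :
  modz (modz a (zp_mod p n.+1)) (zp_mod p n) = modz a (zp_mod p n).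
Proof.
rewrite {2}(intdiv.divz_eq a (zp_mod p n.+1)) /zp_mod expnSr PoszM.
set q := intdiv.divz _ _; set B := Posz (_ ^ _); set b := Posz _.
have -> : q * (B * b) = (q * b) * B by rewrite mulrCA mulrC.
by rewrite modzMDl.
Qed.

Lemma zp_val_mod (p : nat) (x : Zpadic p) n : modz (sval x n) (zp_mod p n) = sval x n.
Proof. by rewrite {2}(proj2_sig x n) {1}(proj2_sig x n) modz_mod. Qed.

Lemma zp_eq (p : nat) (x y : Zpadic p) : (forall n, sval x n = sval y n) -> x = y.
Proof.
case: x => f Hf; case: y => g Hg /= H.
have efg : f = g by apply: funext.
subst g; congr exist; exact: Prop_irrelevance.
Qed.

Definition zp_zero (p : nat) : Zpadic p.
Proof. exists (fun _ => 0) => n; by rewrite mod0z. Defined.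

Definition zp_one (p : nat) : Zpadic p.
Proof. exists (fun n => modz 1 (zp_mod p n)) => n; by rewrite zp_modS. Defined.

Definition zp_add (p : nat) (x y : Zpadic p) : Zpadic p.
Proof.
exists (fun n => modz (sval x n + sval y n) (zp_mod p n)) => n.
by rewrite zp_modS (proj2_sig x n) (proj2_sig y n) modzDm.
Defined.

Definition zp_mul (p : nat) (x y : Zpadic p) : Zpadic p.
Proof.
exists (fun n => modz (sval x n * sval y n) (zp_mod p n)) => n.
by rewrite zp_modS (proj2_sig x n) (proj2_sig y n) modzMm.
Defined.

Definition zp_opp (p : nat) (x : Zpadic p) : Zpadic p.
Proof.
exists (fun n => modz (- sval x n) (zp_mod p n)) => n.
by rewrite zp_modS (proj2_sig x n) modzNm.
Defined.

Lemma zp_addA (p : nat) : associative (@zp_add p).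
Proof. by move=> x y z; apply: zp_eq => n /=; rewrite modzDml modzDmr addrA. Qed.
Lemma zp_addC (p : nat) : commutative (@zp_add p).
Proof. by move=> x y; apply: zp_eq => n /=; rewrite addrC. Qed.
Lemma zp_add0 (p : nat) : left_id (zp_zero p) (@zp_add p).
Proof. by move=> x; apply: zp_eq => n /=; rewrite add0r zp_val_mod. Qed.
Lemma zp_addN (p : nat) : left_inverse (zp_zero p) (@zp_opp p) (@zp_add p).
Proof. by move=> x; apply: zp_eq => n /=; rewrite modzDml addNr mod0z. Qed.

HB.instance Definition _ (p : nat) :=
  GRing.isZmodule.Build (Zpadic p) (@zp_addA p) (@zp_addC p) (@zp_add0 p) (@zp_addN p).

Lemma zp_mulA (p : nat) : associative (@zp_mul p).
Proof. by move=> x y z; apply: zp_eq => n /=; rewrite modzMml modzMmr mulrA. Qed.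
Lemma zp_mulC (p : nat) : commutative (@zp_mul p).
Proof. by move=> x y; apply: zp_eq => n /=; rewrite mulrC. Qed.
Lemma zp_mul1 (p : nat) : left_id (zp_one p) (@zp_mul p).
Proof. by move=> x; apply: zp_eq => n /=; rewrite modzMml mul1r zp_val_mod. Qed.
Lemma zp_mulD (p : nat) : left_distributive (@zp_mul p) +%R.
Proof.
move=> x y z; apply: zp_eq => n /=.
by rewrite modzMml mulrDl modzDm.
Qed.
Lemma zp_one_neq0 (p : nat) : zp_one p != 0.
Proof.
apply/eqP => H; have := f_equal (fun z : Zpadic p => sval z 1%N) H.
rewrite /= modz_small //= /zp_mod expn1 /zp_base.
Qed.

HB.instance Definition _ (p : nat) :=
  GRing.Zmodule_isComNzRing.Build (Zpadic p) (@zp_mulA p) (@zp_mulC p) (@zp_mul1 p)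
    (@zp_mulD p) (@zp_one_neq0 p).


Definition ideal_mul (F : fieldType) (I J : F -> Prop) : F -> Prop :=
  fun z => exists s : seq (F * F),
    (forall u, u \in s -> I u.1 /\ J u.2) /\ z = \sum_(u <- s) u.1 * u.2.

Definition ideal_scale (F : fieldType) (a : F) (J : F -> Prop) : F -> Prop :=
  fun z => exists y, J y /\ z = a * y.

Definition frac_ideal (F : fieldType) (D I : F -> Prop) : Prop :=
  [/\ I 0,
      (forall x y, I x -> I y -> I (x + y)),
      (forall a x, D a -> I x -> I (a * x)) &
      exists2 d, (d != 0) /\ D d & forall x, I x -> D (d * x)].

Definition invertible_ideal (F : fieldType) (D I : F -> Prop) : Prop :=
  frac_ideal D I /\
  exists J, frac_ideal D J /\ (forall z, ideal_mul I J z <-> D z).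

Definition ideal_equiv (F : fieldType) (I J : F -> Prop) : Prop :=
  exists2 a : F, a != 0 & forall z, I z <-> ideal_scale a J z.

Definition principal_ideal (F : fieldType) (D I : F -> Prop) : Prop :=
  ideal_equiv I D.

(* Since Pic is the group of invertible fractional
   ideals modulo principal ones, a group isomorphism
   Pic(D) -> \bigoplus_i Pic(Ds i) is the same as a map phi on invertible
   fractional ideals (representatives) such that
   - phi I is a family of invertible ideals, almost all principal,
   - the induced map on classes is well defined and injective (hphi_equiv),
   - it is multiplicative on classes (hphi_mul),
   - every finitely supported family of classes is attained (hphi_surj). *)
Definition Pic_iso_direct_sum (F : fieldType) (D : F -> Prop)
    (idx : nat -> Prop) (Ds : nat -> F -> Prop) : Prop :=
  exists phi : (F -> Prop) -> nat -> F -> Prop,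
  [/\ (forall I, invertible_ideal D I ->
         forall i, idx i -> invertible_ideal (Ds i) (phi I i)),
      (forall I, invertible_ideal D I ->
         exists N, forall i, idx i -> (N < i)%N -> principal_ideal (Ds i) (phi I i)),
      (forall I J, invertible_ideal D I -> invertible_ideal D J ->
         forall i, idx i ->
           ideal_equiv (phi (ideal_mul I J) i) (ideal_mul (phi I i) (phi J i))),
      (forall I J, invertible_ideal D I -> invertible_ideal D J ->
         (ideal_equiv I J <-> forall i, idx i -> ideal_equiv (phi I i) (phi J i))) &
      (forall Js : nat -> F -> Prop,
         (forall i, idx i -> invertible_ideal (Ds i) (Js i)) ->
         (exists N, forall i, idx i -> (N < i)%N -> principal_ideal (Ds i) (Js i)) ->
         exists2 I, invertible_ideal D I & forall i, idx i -> ideal_equiv (phi I i) (Js i))].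

(* K, with iota : Z_p -> K, is an algebraic closure of Q_p = Frac(Z_p):
   iota is injective, K is algebraically closed, and every element of K
   is algebraic over (the image of) Z_p, equivalently over Q_p. *)
Definition is_alg_closure_Qp (p : nat) (K : fieldType) (iota : {rmorphism Zpadic p -> K}) : Prop :=
  [/\ injective iota,
      GRing.closed_field_axiom K &
      forall a : K, exists q : {poly Zpadic p}, q != 0 /\ root (map_poly iota q) a].

Definition in_Zp_bar (p : nat) (K : fieldType) (iota : {rmorphism Zpadic p -> K}) (a : K) : Prop :=
  exists q : {poly Zpadic p}, q \is monic /\ root (map_poly iota q) a.

Definition IntQ_at (p : nat) (K : fieldType) (iota : {rmorphism Zpadic p -> K})
    (E : K -> Prop) (f : {poly rat}) : Prop :=
  forall a, E a -> in_Zp_bar iota (map_poly (@ratr K) f).[a].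

Definition IntQ_global (K : nat -> fieldType) (iota : forall p, {rmorphism Zpadic p -> K p})
    (E : forall p, K p -> Prop) (f : {poly rat}) : Prop :=
  forall p, prime p -> IntQ_at (iota p) (E p) f.

(* A subring of Q[X], viewed inside its fraction field Q(X). *)
Definition QX := {fraction {poly rat}}.
Definition in_QX (P : {poly rat} -> Prop) : QX -> Prop :=
  fun z => exists2 g, P g & z = tofrac g.

(* Main.v *)
Require Import Defs.
From HB Require Import structures.
From mathcomp Require Import all_boot all_order all_algebra.
From mathcomp Require Import boolp.
Set Implicit Arguments. Unset Strict Implicit. Unset Printing Implicit Defensive.
Import Order.TTheory GRing.Theory Num.Theory.

Definition Zpoly (g : {poly rat}) := exists h : {poly int}, g = map_poly (intr : int -> rat) h.
Definition Zloc (p : nat) (g : {poly rat}) := exists n : nat, ~~ (p %| n)%N /\ Zpoly (n%:R *: g).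

Section PAdic.
Local Open Scope ring_scope.
Variable p : nat.
Hypothesis pp : prime p.

Lemma zp_baseE : zp_base p = p.
Proof. by rewrite /zp_base; case: p pp => [|[|q]]. Qed.

Lemma zp_addE (x y : Zpadic p) k : sval (x + y) k = modz (sval x k + sval y k) (zp_mod p k).
Proof. by []. Qed.
Lemma zp_mulE (x y : Zpadic p) k : sval (x * y) k = modz (sval x k * sval y k) (zp_mod p k).
Proof. by []. Qed.
Lemma zp_oneE k : sval (1 : Zpadic p) k = modz 1 (zp_mod p k).
Proof. by []. Qed.
Lemma zp_zeroE k : sval (0 : Zpadic p) k = 0.
Proof. by []. Qed.

Lemma zp_natE n k : sval (n%:R : Zpadic p) k = modz n%:Z (zp_mod p k).
Proof.
elim: n => [|n IH]; first by rewrite zp_zeroE mod0z.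
by rewrite mulrS zp_addE zp_oneE IH modzDm.
Qed.

Lemma zp_nat_neq0 n : (0 < n)%N -> (n%:R : Zpadic p) != 0.
Proof.
move=> n0; apply/negP => /eqP H.
have H2 : sval (n%:R : Zpadic p) n = sval (0 : Zpadic p) n by rewrite H.
move: H2; rewrite zp_natE zp_zeroE /zp_mod zp_baseE modz_nat.
have lt : (n < p ^ n)%N by apply: ltn_expl; exact: prime_gt1.
rewrite (modn_small lt) => -[] h.
by rewrite h in n0.
Qed.
Lemma zp_unit n : ~~ (p %| n)%N -> exists u : Zpadic p, n%:R * u = 1.
Proof.
move=> pn.
have n0 : (0 < n)%N by case: n pn => //; rewrite dvdn0.
have cop k : coprime n (p ^ k) by rewrite coprimeXr // coprime_sym prime_coprime.
pose v k := ((egcdn n (p ^ k)).1 %% p ^ k)%N.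
have vP k : (n * v k = 1 %[mod p ^ k])%N.
  rewrite /v; case: egcdnP => // km kn E _ /=.
  by rewrite modnMmr mulnC E (eqP (cop k)) modnMDl.
have uniq k a b : (n * a = n * b %[mod p ^ k])%N -> (a = b %[mod p ^ k])%N.
  move=> hab; case: (egcdnP (p ^ k) n0) => km kn E _.
  rewrite (eqP (cop k)) in E.
  have ha : (a = km * n * a %[mod p ^ k])%N by rewrite E mulnDl mul1n mulnAC modnMDl.
  have hb : (b = km * n * b %[mod p ^ k])%N by rewrite E mulnDl mul1n mulnAC modnMDl.
  by rewrite ha hb -!mulnA -modnMmr hab modnMmr.
have coh : zp_coh p (fun k => (v k)%:Z).
  move=> k; rewrite /zp_mod zp_baseE modz_nat; congr Posz.
  have h1 : (n * v k.+1 = 1 %[mod p ^ k])%N.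
    by rewrite -(modn_dvdm _ (dvdn_exp2l p (leqnSn k))) vP modn_dvdm // dvdn_exp2l.
  have := uniq k (v k) (v k.+1); rewrite vP h1 => /(_ erefl) h.
  by rewrite -h /v modn_mod.
exists (exist _ _ coh); apply: zp_eq => k.
rewrite zp_mulE zp_natE zp_oneE /=.
rewrite modzMml /zp_mod zp_baseE -PoszM !modz_nat; congr Posz.
exact: vP.
Qed.

Variable K : fieldType.
Variable iota : {rmorphism Zpadic p -> K}.
Hypothesis inj : injective iota.

Lemma K_char0 n : (0 < n)%N -> (n%:R : K) != 0.
Proof.
move=> n0; rewrite -(rmorph_nat iota); apply/eqP => h.
have : iota n%:R = iota 0 by rewrite h rmorph0.
by move/inj/eqP; rewrite (negPf (zp_nat_neq0 n0)).
Qed.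

Lemma K_int_neq0 (z : int) : z != 0 -> (z%:~R : K) != 0.
Proof.
case: z => [n|n] h.
  by rewrite -pmulrn K_char0 // lt0n; apply: contra h => /eqP ->.
by rewrite NegzE mulrNz oppr_eq0 -pmulrn K_char0.
Qed.

Fact ratrK_zmod : zmod_morphism (@ratr K).
Proof.
have injZtoQ: @injective rat int intr by apply: intr_inj.
have nz_den x: (denq x)%:~R != 0 :> K by rewrite K_int_neq0 // denq_eq0.
move=> x y.
apply: (canLR (mulfK (nz_den _))); apply: (mulIf (nz_den x)).
rewrite mulrAC mulrBl divfK ?nz_den // mulrAC -!rmorphM.
apply: (mulIf (nz_den y)); rewrite mulrAC mulrBl divfK ?nz_den //.
rewrite -!(rmorphM, rmorphB); congr _%:~R; apply: injZtoQ.
rewrite !(rmorphM, rmorphB) /= [_ - _]lock /= -lock !numqE.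
by rewrite (mulrAC y) -!mulrBl -mulrA mulrAC !mulrA.
Qed.

Fact ratrK_monoid : monoid_morphism (@ratr K).
Proof.
have injZtoQ: @injective rat int intr by apply: intr_inj.
have nz_den x: (denq x)%:~R != 0 :> K by rewrite K_int_neq0 // denq_eq0.
split=> [|x y]; first by rewrite /ratr divr1.
rewrite /ratr mulrC mulrAC; apply: canLR (mulKf (nz_den _)) _; rewrite !mulrA.
do 2!apply: canRL (mulfK (nz_den _)) _; rewrite -!rmorphM; congr _%:~R.
apply: injZtoQ; rewrite !rmorphM [x * y]lock /= !numqE -lock.
by rewrite -!mulrA mulrA mulrCA -!mulrA (mulrCA y).
Qed.

Definition ratrK : {rmorphism rat -> K} :=
  HB.pack (@ratr K) (GRing.isZmodMorphism.Build rat K (@ratr K) ratrK_zmod)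
                    (GRing.isMonoidMorphism.Build rat K (@ratr K) ratrK_monoid).

Lemma ratrKE x : ratrK x = ratr x.
Proof. by []. Qed.

Lemma in_Zp_barE a : in_Zp_bar iota a <-> integralOver iota a.
Proof. by split=> [[q [m r]]|[q m r]]; exists q. Qed.

Variable E : K -> Prop.

Lemma IntQ_atD f g : IntQ_at iota E f -> IntQ_at iota E g -> IntQ_at iota E (f + g).
Proof.
move=> hf hg a Ea; apply/in_Zp_barE.
have -> : map_poly (@ratr K) (f + g) = map_poly ratrK (f + g) by [].
rewrite rmorphD hornerD; apply: integral_add; apply/in_Zp_barE; [exact: hf|exact: hg].
Qed.

Lemma IntQ_atM f g : IntQ_at iota E f -> IntQ_at iota E g -> IntQ_at iota E (f * g).
Proof.
move=> hf hg a Ea; apply/in_Zp_barE.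
have -> : map_poly (@ratr K) (f * g) = map_poly ratrK (f * g) by [].
rewrite rmorphM hornerM; apply: integral_mul; apply/in_Zp_barE; [exact: hf|exact: hg].
Qed.

Hypothesis hE : forall a, E a -> in_Zp_bar iota a.

Lemma IntQ_at_Zloc f : Zloc p f -> IntQ_at iota E f.
Proof.
move=> [n [pn [h Hh]]] a Ea; apply/in_Zp_barE.
have [u Hu] := zp_unit pn.
have n0 : (0 < n)%N by case: n pn {Hh Hu} => //; rewrite dvdn0.
have nQ : (n%:R : rat) != 0 by rewrite pnatr_eq0 -lt0n.
have iu : iota u = (n%:R)^-1.
  have := f_equal iota Hu; rewrite rmorphM rmorph1 rmorph_nat => e.
  by rewrite -[iota u](mulKf (K_char0 n0)) e mulr1.
have cf i : f`_i = (n%:R)^-1 * (h`_i)%:~R.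
  have := f_equal (fun q : {poly rat} => q`_i) Hh.
  rewrite /= coefZ coef_map_id0 // => e.
  by rewrite -e mulKf.
apply: integral_horner; last by apply/in_Zp_barE; exact: hE.
apply/integral_poly => i.
rewrite coef_map_id0; last by rewrite -ratrKE rmorph0.
rewrite -ratrKE cf rmorphM fmorphV rmorph_nat rmorph_int -iu -(rmorph_int iota) -rmorphM.
exact: integral_id.
Qed.

End PAdic.

From HB Require Import structures.
From mathcomp Require Import all_boot all_order all_algebra.
From mathcomp Require Import boolp.
From mathcomp Require Import ring.
Set Implicit Arguments. Unset Strict Implicit. Unset Printing Implicit Defensive.
Import Order.TTheory GRing.Theory Num.Theory.

Section PartB.
Local Open Scope ring_scope.

Definition pfree (p : nat) (r : rat) := exists m n : nat,
  [/\ ~~ (p %| m)%N, ~~ (p %| n)%N & (r = m%:R / n%:R \/ r = - (m%:R / n%:R))].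

Definition ppart (p : nat) (r : rat) : rat :=
  (p ^ logn p `|numq r|)%N%:R / (p ^ logn p `|denq r|)%N%:R.

Lemma Zpoly_int (z : int) : Zpoly ((z%:~R : rat)%:P).
Proof. by exists z%:P; rewrite map_polyC. Qed.

Lemma Zpoly_nat (n : nat) : Zpoly ((n%:R : rat)%:P).
Proof. exact: (Zpoly_int n). Qed.

Lemma Zpoly_map (h : {poly int}) : Zpoly (map_poly (intr : int -> rat) h).
Proof. by exists h. Qed.

Lemma Zpoly_opp g : Zpoly g -> Zpoly (- g).
Proof. by move=> [h ->]; exists (- h); rewrite rmorphN. Qed.

Lemma Zloc_Zpoly p g : prime p -> Zpoly g -> Zloc p g.
Proof.
move=> pp zg; exists 1%N; split; first by rewrite dvdn1; apply/eqP => e; move: pp; rewrite e.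
by rewrite scale1r.
Qed.

Lemma pfree_nz p r : pfree p r -> r != 0.
Proof.
move=> [m [n [pm pn E]]].
have m0 : (0 < m)%N by case: m pm {E} => //; rewrite dvdn0.
have n0 : (0 < n)%N by case: n pn {E} => //; rewrite dvdn0.
have hm : (m%:R : rat) != 0 by rewrite pnatr_eq0 -lt0n.
have hn : (n%:R : rat) != 0 by rewrite pnatr_eq0 -lt0n.
by case: E => ->; rewrite ?oppr_eq0 mulf_neq0 ?invr_eq0.
Qed.

Lemma pfreeV p r : pfree p r -> pfree p r^-1.
Proof.
move=> [m [n [pm pn E]]]; exists n, m; split => //.
by case: E => ->; [left|right]; rewrite ?invrN invf_div.
Qed.

Lemma Zloc_pfree p r : pfree p r -> Zloc p (r%:P).
Proof.
move=> [m [n [pm pn E]]]; exists n; split => //.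
have n0 : (0 < n)%N by case: n pn {E} => //; rewrite dvdn0.
have hn : (n%:R : rat) != 0 by rewrite pnatr_eq0 -lt0n.
rewrite -mul_polyC -polyCM.
case: E => ->; rewrite ?mulrN mulrCA divff // mulr1.
  exact: Zpoly_nat.
have -> : (- (m%:R) : rat) = (- m%:Z)%:~R by rewrite mulrNz.
exact: Zpoly_int.
Qed.

Lemma pfree_invn p n : prime p -> ~~ (p %| n)%N -> pfree p ((n%:R)^-1).
Proof.
move=> pp pn; exists 1%N, n; split => //; last by left; rewrite div1r.
by rewrite dvdn1; apply/eqP => e; move: pp; rewrite e.
Qed.

Lemma pfree_ppart p q r : prime p -> prime q -> p != q -> pfree p (ppart q r).
Proof.
move=> pp pq pq'; rewrite /ppart.
exists (q ^ logn q `|numq r|)%N, (q ^ logn q `|denq r|)%N; split; last by left.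
  by rewrite Euclid_dvdX // dvdn_prime2 // (negPf pq').
by rewrite Euclid_dvdX // dvdn_prime2 // (negPf pq').
Qed.

Lemma pfree_div_ppart p r : prime p -> r != 0 -> pfree p (r / ppart p r).
Proof.
move=> pp r0.
have z0 : (0 < `|numq r|)%N by rewrite absz_gt0 numq_eq0.
have d0 : (0 < `|denq r|)%N by rewrite absz_gt0 denq_eq0.
have [m' cm Em] := pfactor_coprime pp z0.
have [d' cd Ed] := pfactor_coprime pp d0.
exists m', d'; split; [by rewrite -prime_coprime| by rewrite -prime_coprime|].
have hp a : ((p ^ a)%N%:R : rat) != 0 by rewrite pnatr_eq0 -lt0n expn_gt0 prime_gt0.
have hd' : (d'%:R : rat) != 0.
  by rewrite pnatr_eq0; apply/eqP => e; move: d0; rewrite Ed e.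
have Er : r = (numq r)%:~R / (`|denq r|%N)%:R.
  have h : (0 <= denq r) by apply: ltW; exact: denq_gt0.
  have e : (`|denq r|%N : int) = denq r by rewrite gez0_abs.
  by rewrite -[in LHS](divq_num_den r); congr (_ / _); rewrite -[in LHS]e.
rewrite /ppart.
set b := (numq r < 0); set A := (p ^ logn p `|numq r|)%N; set B := (p ^ logn p `|denq r|)%N.
have hA : (A%:R : rat) != 0 by exact: hp.
have hB : (B%:R : rat) != 0 by exact: hp.
have key : r / (A%:R / B%:R) = (-1) ^+ b * (m'%:R / d'%:R).
  rewrite {1}Er {1}[numq r]intEsign -/b Em Ed rmorphM /= rmorph_sign.
  have -> : (((m' * A)%N : int)%:~R : rat) = m'%:R * A%:R by rewrite -natrM.
  rewrite natrM; field; rewrite ?hA ?hB ?hd' //.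
rewrite key; clear key; clearbody b; case: b; [right|left]; rewrite /= ?expr1 ?expr0 ?mulN1r ?mul1r //.
Qed.

Lemma clear_den (f : {poly rat}) : exists n : nat, (0 < n)%N /\ Zpoly (n%:R *: f).
Proof.
have [q [a a0 E]] := rat_poly_scale f.
case: a a0 E => m a0 E.
  exists m; split; first by rewrite lt0n; apply: contra a0 => /eqP ->.
  have hm : (m%:R : rat) != 0 by rewrite pnatr_eq0; apply: contra a0 => /eqP ->.
  by rewrite E scalerA -pmulrn divff // scale1r; exact: Zpoly_map.
exists m.+1; split => //.
rewrite E scalerA NegzE mulrNz invrN mulrN -pmulrn divff ?pnatr_eq0 //.
by rewrite scaleN1r; apply/Zpoly_opp/Zpoly_map.
Qed.

Lemma Zloc_large (f : {poly rat}) : exists N, forall p, prime p -> (N < p)%N -> Zloc p f.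
Proof.
have [n [n0 zn]] := clear_den f; exists n => p pp lt; exists n; split => //.
by apply/negP => /(dvdn_leq n0); rewrite leqNgt lt.
Qed.

Lemma Zloc_pfree_part (f : {poly rat}) p : prime p ->
  exists e : nat, ~~ (p %| e)%N /\ forall q, prime q -> q != p -> Zloc q (e%:R *: f).
Proof.
move=> pp; have [n [n0 zn]] := clear_den f.
have [m cm Em] := pfactor_coprime pp n0.
exists m; split; first by rewrite -prime_coprime.
move=> q pq qp; exists (p ^ logn p n)%N; split.
  by rewrite Euclid_dvdX // dvdn_prime2 // (negPf qp).
by rewrite scalerA -natrM mulnC -Em.
Qed.

End PartB.

From HB Require Import structures.
From mathcomp Require Import all_boot all_order all_algebra.
From mathcomp Require Import boolp.
From mathcomp Require Import ring.
Set Implicit Arguments. Unset Strict Implicit. Unset Printing Implicit Defensive.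
Import Order.TTheory GRing.Theory Num.Theory.

Section Generic.
Local Open Scope ring_scope.
Local Notation F := QX.

Definition ringP (S : F -> Prop) := [/\ S 0, S 1, (forall x y, S x -> S y -> S (x + y)),
  (forall x, S x -> S (- x)) & (forall x y, S x -> S y -> S (x * y))].
Definition polyS (S : F -> Prop) := forall z, S z -> exists g, z = tofrac g.
Definition moduleP (S M : F -> Prop) := [/\ M 0, (forall x y, M x -> M y -> M (x + y)) &
  (forall a x, S a -> M x -> M (a * x))].

Variable S : F -> Prop.
Hypothesis hS : ringP S.
Implicit Types I J M : F -> Prop.

Lemma S0 : S 0. Proof. by case: hS. Qed.
Lemma S1 : S 1. Proof. by case: hS. Qed.
Lemma SD x y : S x -> S y -> S (x + y). Proof. by case: hS => _ _ h _ _; apply: h. Qed.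
Lemma SN x : S x -> S (- x). Proof. by case: hS => _ _ _ h _; apply: h. Qed.
Lemma SM x y : S x -> S y -> S (x * y). Proof. by case: hS => _ _ _ _ h; apply: h. Qed.

Lemma Snat n : S n%:R.
Proof. elim: n => [|n IH]; [exact: S0| by rewrite mulrS; apply: SD => //; exact: S1]. Qed.

Lemma S_module : moduleP S S.
Proof. by split; [exact: S0|exact: SD|move=> a x; exact: SM]. Qed.

Lemma frac_module I : frac_ideal S I -> moduleP S I.
Proof. by case. Qed.

Lemma mod0 M : moduleP S M -> M 0. Proof. by case. Qed.
Lemma modD M : moduleP S M -> forall x y, M x -> M y -> M (x + y). Proof. by case. Qed.
Lemma modM M : moduleP S M -> forall a x, S a -> M x -> M (a * x). Proof. by case. Qed.
Lemma modN M : moduleP S M -> forall x, M x -> M (- x).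
Proof. by move=> hM x Mx; rewrite -mulN1r; apply: (modM hM) => //; apply: SN; exact: S1. Qed.
Lemma modB M : moduleP S M -> forall x y, M x -> M y -> M (x - y).
Proof. by move=> hM x y Mx My; apply: (modD hM) => //; apply: (modN hM). Qed.
Lemma modnat M : moduleP S M -> forall n x, M x -> M (n%:R * x).
Proof. by move=> hM n x Mx; apply: (modM hM) => //; exact: Snat. Qed.

Lemma mod_sum M (T : eqType) (s : seq T) (f : T -> F) : moduleP S M ->
  (forall u, u \in s -> M (f u)) -> M (\sum_(u <- s) f u).
Proof.
move=> hM; elim: s => [|a s IH] h; first by rewrite big_nil; exact: (mod0 hM).
rewrite big_cons; apply: (modD hM); first by apply: h; rewrite inE eqxx.
by apply: IH => u us; apply: h; rewrite inE us orbT.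
Qed.

Lemma imul_single (I J : F -> Prop) u v : I u -> J v -> ideal_mul I J (u * v).
Proof. by move=> Iu Jv; exists [:: (u, v)]; split; [move=> w; rewrite inE => /eqP -> | rewrite big_seq1]. Qed.

Lemma imul_sub (I J M : F -> Prop) : M 0 -> (forall x y, M x -> M y -> M (x + y)) ->
  (forall u v, I u -> J v -> M (u * v)) -> forall z, ideal_mul I J z -> M z.
Proof.
move=> M0 MD Muv z [s [hs ->]].
elim: s hs => [|a s IH] hs; first by rewrite big_nil.
rewrite big_cons; apply: MD.
  by have [] := hs a (mem_head _ _); apply: Muv.
by apply: IH => w ws; apply: hs; rewrite inE ws orbT.
Qed.

Lemma imul_module I J : moduleP S I -> moduleP S (ideal_mul I J).
Proof.
move=> hI; split.
- by exists [::]; split => //; rewrite big_nil.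
- move=> x y [s1 [h1 ->]] [s2 [h2 ->]]; exists (s1 ++ s2); split; last by rewrite big_cat.
  by move=> u; rewrite mem_cat => /orP [/h1|/h2].
- move=> a x Sa [s [h ->]]; exists [seq (a * u.1, u.2) | u <- s]; split.
    move=> w /mapP [u us ->] /=; have [h1 h2] := h u us; split => //.
    exact: (modM hI).
  by rewrite big_map mulr_sumr; apply: eq_bigr => u _ /=; rewrite mulrA.
Qed.

Lemma imul_ext (I I' J J' : F -> Prop) : (forall z, I z <-> I' z) -> (forall z, J z <-> J' z) ->
  forall z, ideal_mul I J z -> ideal_mul I' J' z.
Proof.
move=> hI hJ z [s [h ->]]; exists s; split => // u us.
by have [] := h u us; rewrite hI hJ.
Qed.

Lemma inv_data I : invertible_ideal S I -> exists J (s : seq (F * F)),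
  [/\ frac_ideal S J, (forall z, ideal_mul I J z <-> S z),
      (forall u, u \in s -> I u.1 /\ J u.2) & \sum_(u <- s) u.1 * u.2 = 1].
Proof.
move=> [fI [J [fJ hIJ]]].
have [s [hs e]] : ideal_mul I J 1 by apply/hIJ; exact: S1.
by exists J, s; split.
Qed.

Lemma inv_gen I J (s : seq (F * F)) : (forall z, ideal_mul I J z <-> S z) ->
  (forall u, u \in s -> I u.1 /\ J u.2) -> \sum_(u <- s) u.1 * u.2 = 1 ->
  forall z, I z -> z = \sum_(u <- s) (z * u.2) * u.1 /\ (forall u, u \in s -> S (z * u.2)).
Proof.
move=> hIJ hs e z Iz; split.
  rewrite -[z in LHS]mulr1 -e mulr_sumr; apply: eq_bigr => u _.
  by rewrite mulrAC mulrA.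
move=> u us; apply/hIJ; apply: imul_single => //.
by have [] := hs u us.
Qed.

Lemma inv_colon I J (s : seq (F * F)) : moduleP S J ->
  (forall u, u \in s -> I u.1 /\ J u.2) -> \sum_(u <- s) u.1 * u.2 = 1 ->
  forall y, (forall x, I x -> S (y * x)) -> J y.
Proof.
move=> hJ hs e y hy; rewrite -[y]mulr1 -e mulr_sumr.
apply: (mod_sum hJ) => u us; have [Iu Ju] := hs u us.
by rewrite mulrA; apply: (modM hJ) => //; apply: hy.
Qed.

End Generic.

Section GcdList.
Local Open Scope ring_scope.

Lemma gcd_list (fs : seq {poly rat}) : exists g : {poly rat},
  [/\ (forall f, f \in fs -> g %| f), (g = 0 -> forall f, f \in fs -> f = 0) &
   forall P : {poly rat} -> Prop, P 0 -> (forall a b, P a -> P b -> P (a + b)) ->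
     (forall h a, P a -> P (h * a)) -> (forall f, f \in fs -> P f) -> P g].
Proof.
elim: fs => [|f fs [g' [h1 h2 h3]]].
  by exists 0; split => // P P0.
have [u hu] := Bezoutp f g'.
exists (u.1 * f + u.2 * g'); split.
- move=> k; rewrite inE => /orP [/eqP ->|kfs].
    by rewrite (eqp_dvdl _ hu) dvdp_gcdl.
  by apply: (dvdp_trans _ (h1 k kfs)); rewrite (eqp_dvdl _ hu) dvdp_gcdr.
- move=> e; move: hu; rewrite e eqp_sym eqp0 gcdp_eq0 => /andP [/eqP f0 /eqP g0] k.
  by rewrite inE => /orP [/eqP ->|/h2]; [|apply].
- move=> P P0 PD PM Pf; apply: (PD).
    by apply: (PM); exact: (Pf f (mem_head _ _)).
  apply: (PM); apply: h3 => //.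
  by move=> k kfs; apply: (Pf k); rewrite inE kfs orbT.
Qed.

End GcdList.

From HB Require Import structures.
From mathcomp Require Import all_boot all_order all_algebra.
From mathcomp Require Import boolp.
From mathcomp Require Import ring.
Set Implicit Arguments. Unset Strict Implicit. Unset Printing Implicit Defensive.
Import Order.TTheory GRing.Theory Num.Theory.

Section GcdData.
Local Open Scope ring_scope.
Local Notation F := QX.

Lemma gcd_data (S I : F -> Prop) : ringP S -> polyS S -> invertible_ideal S I ->
  exists2 alpha : F, alpha != 0 & exists J (s : seq (F * F)),
  [/\ frac_ideal S J, (forall z, ideal_mul I J z <-> S z),
      (forall u, u \in s -> [/\ I u.1, J u.2 & exists r, u.1 = alpha * tofrac r]),
      \sum_(u <- s) u.1 * u.2 = 1 &
      (forall P : F -> Prop, P 0 -> (forall x y, P x -> P y -> P (x + y)) ->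
        (forall h z, P z -> P (tofrac h * z)) -> (forall z, I z -> P z) -> P alpha)].
Proof.
move=> hS pS invI.
have [J [s [fJ hIJ hs e]]] := inv_data hS invI.
have [_ _ _ [d [d0 Sd] hd]] := invI.1.
have ex : forall u : F * F, exists g : {poly rat}, u \in s -> d * u.1 = tofrac g.
  move=> u; case us: (u \in s); last by exists 0.
  have [Iu _] := hs u us; have [g hg] := pS _ (hd _ Iu).
  by exists g.
have [fp hfp] := choice ex.
have [g [hdiv hzero hP]] := gcd_list [seq fp u | u <- s].
have dK x : d * x / d = x by rewrite mulrC mulKf.
have u1E u : u \in s -> u.1 = tofrac (fp u) / d by move=> us; rewrite -hfp // mulrC mulKf.
exists (tofrac g / d).
  apply: mulf_neq0; last by rewrite invr_eq0.
  rewrite tofrac_eq0; apply/eqP => g0.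
  have h0 : \sum_(u <- s) u.1 * u.2 = 0.
    rewrite big_seq; apply: big1 => u us.
    have fu : fp u = 0 by apply: (hzero g0 (fp u)); apply/mapP; exists u.
    by rewrite u1E // fu tofrac0 !mul0r.
  by move: (oner_neq0 F); rewrite -e h0 eqxx.
exists J, s; split => //.
- move=> u us; have [Iu Ju] := hs u us; split => //.
  exists (fp u %/ g).
  have dv : g %| fp u by apply: hdiv; apply/mapP; exists u.
  by rewrite mulrAC -tofracM divpKC // u1E.
- move=> P P0 PD PM PI.
  apply: (hP (fun h => P (tofrac h / d))).
  + by rewrite tofrac0 mul0r.
  + by move=> a b Pa Pb; rewrite tofracD mulrDl; apply: PD.
  + by move=> h a Pa; rewrite tofracM -mulrA; apply: PM.
  + move=> f /mapP [u us ->]; rewrite -u1E //.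
    by apply: PI; have [] := hs u us.
Qed.

End GcdData.

From HB Require Import structures.
From mathcomp Require Import all_boot all_order all_algebra.
From mathcomp Require Import boolp.
From mathcomp Require Import ring.
Set Implicit Arguments. Unset Strict Implicit. Unset Printing Implicit Defensive.
Import Order.TTheory GRing.Theory Num.Theory.

Section Basic.
Local Open Scope ring_scope.
Local Notation F := QX.

Lemma imul_mono (I I' J J' : F -> Prop) : (forall z, I z -> I' z) -> (forall z, J z -> J' z) ->
  forall z, ideal_mul I J z -> ideal_mul I' J' z.
Proof.
move=> hI hJ z [s [h ->]]; exists s; split => // u us.
by have [] := h u us; split; [apply: hI|apply: hJ].
Qed.

Lemma F_nat_neq0 n : (0 < n)%N -> (n%:R : F) != 0.
Proof.
move=> n0; rewrite -(rmorph_nat (@tofrac {poly rat})) tofrac_eq0.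
by rewrite -(rmorph_nat (@polyC rat)) polyC_eq0 pnatr_eq0 -lt0n.
Qed.

Lemma ndiv_pos p n : ~~ (p %| n)%N -> (0 < n)%N.
Proof. by case: n => //; rewrite dvdn0. Qed.

Lemma ndiv_mul p n m : prime p -> ~~ (p %| n)%N -> ~~ (p %| m)%N -> ~~ (p %| n * m)%N.
Proof. by move=> pp pn pm; rewrite Euclid_dvdM // negb_or pn pm. Qed.

Lemma ndiv1 p : prime p -> ~~ (p %| 1)%N.
Proof. by move=> pp; rewrite dvdn1; apply/eqP => e; move: pp; rewrite e. Qed.

Lemma tofrac_natZ n (g : {poly rat}) : tofrac (n%:R *: g) = n%:R * tofrac g.
Proof.
by rewrite -mul_polyC tofracM (rmorph_nat (@polyC rat)) (rmorph_nat (@tofrac {poly rat})).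
Qed.

Lemma tofrac_invn n : (0 < n)%N -> tofrac (((n%:R : rat)^-1)%:P) = (n%:R : F)^-1.
Proof.
move=> n0.
have e : tofrac (((n%:R : rat)^-1)%:P) * (n%:R : F) = 1.
  rewrite -(rmorph_nat (@tofrac {poly rat})) -tofracM -(rmorph_nat (@polyC rat)) -polyCM.
  by rewrite mulVf ?pnatr_eq0 -?lt0n // tofrac1.
apply: (mulIf (F_nat_neq0 n0)); rewrite e mulVf //; exact: F_nat_neq0.
Qed.

Lemma Zpoly0 : Zpoly 0.
Proof. by exists 0; rewrite map_poly0. Qed.

Lemma Zpoly1 : Zpoly 1.
Proof. by have := Zpoly_nat 1; rewrite mulr1n polyC1. Qed.

End Basic.

Section Local.
Local Open Scope ring_scope.
Local Notation F := QX.

Variable R : nat -> F -> Prop.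
Hypothesis HRD : forall p, prime p -> forall x y, R p x -> R p y -> R p (x + y).
Hypothesis HRM : forall p, prime p -> forall x y, R p x -> R p y -> R p (x * y).
Hypothesis HRpoly : forall p, prime p -> forall z, R p z -> exists g, z = tofrac g.
Hypothesis HRloc : forall p, prime p -> forall g, Zloc p g -> R p (tofrac g).
Variable D : F -> Prop.
Hypothesis HD : forall z, D z <-> forall p, prime p -> R p z.

Lemma RZ p g : prime p -> Zpoly g -> R p (tofrac g).
Proof. by move=> pp zg; apply: HRloc => //; apply: Zloc_Zpoly. Qed.

Lemma ringR p : prime p -> ringP (R p).
Proof.
move=> pp; split.
- by rewrite -tofrac0; apply: RZ => //; exact: Zpoly0.
- by rewrite -tofrac1; apply: RZ => //; exact: Zpoly1.
- exact: HRD.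
- move=> x Rx; rewrite -mulN1r; apply: HRM => //.
  by rewrite -tofrac1 -tofracN; apply: RZ => //; apply: Zpoly_opp; exact: Zpoly1.
- exact: HRM.
Qed.

Lemma DZ g : Zpoly g -> D (tofrac g).
Proof. by move=> zg; apply/HD => p pp; apply: RZ. Qed.

Lemma ringD : ringP D.
Proof.
split.
- by apply/HD => p pp; exact: (S0 (ringR pp)).
- by apply/HD => p pp; exact: (S1 (ringR pp)).
- by move=> x y /HD Dx /HD Dy; apply/HD => p pp; apply: (SD (ringR pp)); [apply: Dx|apply: Dy].
- by move=> x /HD Dx; apply/HD => p pp; apply: (SN (ringR pp)); apply: Dx.
- by move=> x y /HD Dx /HD Dy; apply/HD => p pp; apply: (SM (ringR pp)); [apply: Dx|apply: Dy].
Qed.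

Lemma polyD : polyS D.
Proof. by move=> z /HD Dz; apply: (HRpoly (p := 2)) => //; apply: Dz. Qed.

Lemma polyR p : prime p -> polyS (R p).
Proof. by move=> pp z; apply: HRpoly. Qed.

Lemma D_R p z : prime p -> D z -> R p z.
Proof. by move=> pp /HD; apply. Qed.

Lemma R_invn p n : prime p -> ~~ (p %| n)%N -> R p (n%:R)^-1.
Proof.
move=> pp pn; rewrite -tofrac_invn ?(ndiv_pos pn) //.
by apply: HRloc => //; apply: Zloc_pfree; apply: pfree_invn.
Qed.

Lemma factB p z : prime p -> R p z -> exists e : nat, ~~ (p %| e)%N /\ D (e%:R * z).
Proof.
move=> pp Rz; have [g Eg] := HRpoly pp Rz.
have [e [pe he]] := Zloc_pfree_part g pp.
exists e; split => //; apply/HD => q pq.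
case: (eqVneq q p) => [->|qp].
  by apply: HRM => //; exact: (Snat (ringR pp)).
by rewrite Eg -tofrac_natZ; apply: HRloc => //; apply: he.
Qed.

Definition loc (p : nat) (M : F -> Prop) (x : F) := exists n : nat, ~~ (p %| n)%N /\ M (n%:R * x).

Lemma loc_module p M : prime p -> moduleP D M -> moduleP (R p) (loc p M).
Proof.
move=> pp hM; split.
- by exists 1%N; split; [exact: ndiv1|rewrite mulr0; exact: (mod0 hM)].
- move=> x y [n [pn Mx]] [m [pm My]]; exists (n * m)%N; split; first exact: ndiv_mul.
  have -> : (n * m)%:R * (x + y) = m%:R * (n%:R * x) + n%:R * (m%:R * y) by rewrite natrM; ring.
  by apply: (modD hM); apply: (modnat ringD hM).
- move=> a x Ra [n [pn Mx]]; have [e [pe De]] := factB pp Ra.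
  exists (e * n)%N; split; first exact: ndiv_mul.
  have -> : (e * n)%:R * (a * x) = (e%:R * a) * (n%:R * x) by rewrite natrM; ring.
  exact: (modM hM).
Qed.

Lemma loc_incl p M x : prime p -> M x -> loc p M x.
Proof. by move=> pp Mx; exists 1%N; split; [exact: ndiv1|rewrite mul1r]. Qed.

Lemma loc_in p M N x : prime p -> moduleP (R p) N -> (forall z, M z -> N z) -> loc p M x -> N x.
Proof.
move=> pp hN MN [n [pn Mx]].
rewrite -[x](mulKf (F_nat_neq0 (ndiv_pos pn))).
by apply: (modM hN); [exact: R_invn|apply: MN].
Qed.

Lemma loc_D p x : prime p -> (loc p D x <-> R p x).
Proof.
move=> pp; split.
  by apply: loc_in => //; [exact: (S_module (ringR pp))|move=> z; exact: D_R].
by move=> Rx; have [e [pe De]] := factB pp Rx; exists e.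
Qed.

Lemma loc_ext p M N : (forall z, M z <-> N z) -> forall z, loc p M z <-> loc p N z.
Proof. by move=> h z; split => -[n [pn hn]]; exists n; split => //; apply/h. Qed.

Lemma loc_scale p a M N : prime p -> (forall z, M z <-> exists y, N y /\ z = a * y) ->
  forall z, loc p M z <-> exists y, loc p N y /\ z = a * y.
Proof.
move=> pp h z; split.
  move=> [n [pn /h [y [Ny e]]]].
  have n0 := F_nat_neq0 (ndiv_pos pn).
  exists ((n%:R)^-1 * y); split.
    by exists n; split => //; rewrite mulVKf.
  by rewrite mulrCA -e mulKf.
move=> [y [[n [pn Ny]] ->]]; exists n; split => //; apply/h.
by exists (n%:R * y); split => //; rewrite mulrCA.
Qed.

Lemma global M x : moduleP D M -> (forall p, prime p -> loc p M x) -> M x.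
Proof.
move=> hM hloc.
have key : forall k g, (g <= k)%N -> (0 < g)%N -> M (g%:R * x) -> M x.
  elim => [|k IH] g gk g0 Mg; first by move: gk g0; rewrite leqn0 => /eqP ->.
  case: (leqP g 1) => g1.
    have eg : g = 1%N by apply/eqP; rewrite eqn_leq g1 g0.
    by move: Mg; rewrite eg mul1r.
  have pq := pdiv_prime g1.
  have [n [qn Mn]] := hloc _ pq.
  case: (egcdnP n g0) => km kn Ek _.
  set g' := gcdn g n in Ek.
  have g'0 : (0 < g')%N by rewrite gcdn_gt0 g0.
  have g'g : (g' < g)%N.
    rewrite ltn_neqAle dvdn_leq ?dvdn_gcdl // andbT.
    apply/eqP => eg; move: qn; rewrite (dvdn_trans (pdiv_dvd g)) //.
    by rewrite -eg dvdn_gcdr.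
  apply: (IH g') => //; first by rewrite -ltnS (leq_trans g'g).
  have -> : g'%:R * x = km%:R * (g%:R * x) - kn%:R * (n%:R * x).
    have E : (km%:R * g%:R : F) = kn%:R * n%:R + g'%:R by rewrite -!natrM -natrD Ek.
    by rewrite mulrA E; ring.
  by apply: (modB ringD hM); apply: (modnat ringD hM).
have [n [pn Mn]] := hloc 2%N isT.
exact: (key n n (leqnn n) (ndiv_pos pn) Mn).
Qed.

Lemma loc_mul p M N : prime p -> moduleP D M -> moduleP D N ->
  forall z, ideal_mul (loc p M) (loc p N) z <-> loc p (ideal_mul M N) z.
Proof.
move=> pp hM hN z; split.
  apply: imul_sub.
  - exact: (mod0 (loc_module pp (imul_module N hM))).
  - exact: (modD (loc_module pp (imul_module N hM))).
  move=> u v [n [pn Mu]] [m [pm Nv]]; exists (n * m)%N; split; first exact: ndiv_mul.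
  have -> : (n * m)%:R * (u * v) = (n%:R * u) * (m%:R * v) by rewrite natrM; ring.
  exact: imul_single.
move=> [n [pn hn]].
have hL := imul_module (loc p N) (loc_module pp hM).
rewrite -[z](mulKf (F_nat_neq0 (ndiv_pos pn))).
apply: (modM hL); first exact: R_invn.
by apply: (imul_mono _ _ hn) => w; apply: loc_incl.
Qed.

Lemma loc_frac p M : prime p -> frac_ideal D M -> frac_ideal (R p) (loc p M).
Proof.
move=> pp fM; have hM := frac_module fM.
have hL := loc_module pp hM.
have [_ _ _ [d [d0 Dd] hd]] := fM.
split; [exact: (mod0 hL)|exact: (modD hL)|exact: (modM hL)|].
exists d; first by split; [exact: d0|apply: D_R].
move=> x [n [pn Mx]].
have e : d * x = (n%:R)^-1 * (d * (n%:R * x)).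
  by rewrite mulrCA (mulKf (F_nat_neq0 (ndiv_pos pn))).
by rewrite e; apply: HRM => //; [exact: R_invn|apply: D_R => //; apply: hd].
Qed.


Lemma mod_scale S a M : moduleP S M -> moduleP S (fun w => exists y, M y /\ w = a * y).
Proof.
move=> hM; split.
- by exists 0; split; [exact: (mod0 hM)|rewrite mulr0].
- move=> x y [x' [Mx ->]] [y' [My ->]]; exists (x' + y'); split; last by rewrite mulrDr.
  exact: (modD hM).
- move=> b x Sb [x' [Mx ->]]; exists (b * x'); split; last by rewrite mulrCA.
  exact: (modM hM).
Qed.

Lemma imul_sum (I J : F -> Prop) (T : eqType) (s : seq T) (f g : T -> F) :
  (forall u, u \in s -> I (f u) /\ J (g u)) -> ideal_mul I J (\sum_(u <- s) f u * g u).
Proof.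
move=> h; exists [seq (f u, g u) | u <- s]; split; last by rewrite big_map.
by move=> w /mapP [u us ->]; apply: h.
Qed.

Lemma cond_inv p I : prime p -> invertible_ideal D I -> invertible_ideal (R p) (loc p I).
Proof.
move=> pp [fI [J [fJ hIJ]]]; split; first exact: loc_frac.
exists (loc p J); split; first exact: loc_frac.
move=> z; rewrite loc_mul //; try exact: frac_module.
rewrite (loc_ext p hIJ); exact: loc_D.
Qed.

Lemma cond_mul p I J : prime p -> invertible_ideal D I -> invertible_ideal D J ->
  ideal_equiv (loc p (ideal_mul I J)) (ideal_mul (loc p I) (loc p J)).
Proof.
move=> pp [fI _] [fJ _]; exists 1; first exact: oner_neq0.
move=> z; rewrite -loc_mul //; try exact: frac_module.
by split => [h|[y [h ->]]]; [exists z; rewrite mul1r|rewrite mul1r].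
Qed.

Lemma cond_equiv1 p I J : prime p -> ideal_equiv I J -> ideal_equiv (loc p I) (loc p J).
Proof. by move=> pp [a a0 h]; exists a => //; apply: loc_scale. Qed.

Definition GD (S I : F -> Prop) (alpha : F) := alpha != 0 /\ exists J (s : seq (F * F)),
  [/\ frac_ideal S J, (forall z, ideal_mul I J z <-> S z),
      (forall u, u \in s -> [/\ I u.1, J u.2 & exists r, u.1 = alpha * tofrac r]),
      \sum_(u <- s) u.1 * u.2 = 1 &
      (forall P : F -> Prop, P 0 -> (forall x y, P x -> P y -> P (x + y)) ->
        (forall h z, P z -> P (tofrac h * z)) -> (forall z, I z -> P z) -> P alpha)].

Lemma GD_ex S I : ringP S -> polyS S -> invertible_ideal S I -> exists alpha, GD S I alpha.
Proof. by move=> hS pS iI; have [a a0 h] := gcd_data hS pS iI; exists a. Qed.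

Definition Qmod (alpha : F) (w : F) := exists f, w = alpha * tofrac f.

Lemma Qmod_module S alpha : polyS S -> moduleP S (Qmod alpha).
Proof.
move=> pS; split.
- by exists 0; rewrite tofrac0 mulr0.
- by move=> x y [f ->] [g ->]; exists (f + g); rewrite tofracD mulrDr.
- move=> a x /pS [g ->] [f ->]; exists (g * f); rewrite tofracM; ring.
Qed.

Lemma GD_Q S I alpha : ringP S -> polyS S -> GD S I alpha -> forall z, I z -> Qmod alpha z.
Proof.
move=> hS pS [a0 [J [s [fJ hIJ hs e hP]]]] z Iz.
have hs' : forall u, u \in s -> I u.1 /\ J u.2 by move=> u us; have [a b _] := hs u us.
have [Ez hz] := inv_gen hIJ hs' e Iz.
rewrite Ez; apply: (mod_sum (Qmod_module alpha pS)) => u us.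
apply: (modM (Qmod_module alpha pS)); first exact: hz.
by have [_ _ [r ->]] := hs u us; exists r.
Qed.

Lemma GD_P S I alpha : GD S I alpha -> forall P : F -> Prop, P 0 -> (forall x y, P x -> P y -> P (x + y)) ->
        (forall h z, P z -> P (tofrac h * z)) -> (forall z, I z -> P z) -> P alpha.
Proof. by move=> [a0 [J [s [fJ hIJ hs e hP]]]]. Qed.

Lemma GD_nz S I alpha : GD S I alpha -> alpha != 0.
Proof. by case. Qed.

Lemma list_large (T : eqType) (s : seq T) (Q : nat -> T -> Prop) :
  (forall u, u \in s -> exists N, forall p, (N < p)%N -> Q p u) ->
  exists N, forall p, (N < p)%N -> forall u, u \in s -> Q p u.
Proof.
elim: s => [|a s IH] h; first by exists 0%N.
have [N1 h1] := h a (mem_head _ _).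
have [N2 h2] : exists N, forall p, (N < p)%N -> forall u, u \in s -> Q p u.
  by apply: IH => u us; apply: h; rewrite inE us orbT.
exists (maxn N1 N2) => p; rewrite gtn_max => /andP [l1 l2] u; rewrite inE => /orP [/eqP ->|us].
  exact: h1.
exact: h2.
Qed.

Lemma list_mult (T : eqType) (s : seq T) (Q : nat -> T -> Prop) :
  (forall n m u, Q n u -> Q (m * n)%N u) ->
  (forall u, u \in s -> exists n, (0 < n)%N /\ Q n u) ->
  exists n, (0 < n)%N /\ forall u, u \in s -> Q n u.
Proof.
move=> hQ; elim: s => [|a s IH] h; first by exists 1%N.
have [n1 [n10 h1]] := h a (mem_head _ _).
have [n2 [n20 h2]] : exists n, (0 < n)%N /\ forall u, u \in s -> Q n u.
  by apply: IH => u us; apply: h; rewrite inE us orbT.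
exists (n1 * n2)%N; split; first by rewrite muln_gt0 n10.
move=> u; rewrite inE => /orP [/eqP ->|us].
  by rewrite mulnC; apply: hQ.
by apply: hQ; apply: h2.
Qed.

Lemma GD_princ I alpha : invertible_ideal D I -> GD D I alpha ->
  exists N, forall p, prime p -> (N < p)%N -> forall z, loc p I z <-> exists y, R p y /\ z = alpha * y.
Proof.
move=> [fI _] gd; have hM := frac_module fI.
have [a0 [J [s [fJ hIJ hs e hP]]]] := gd.
have hs' : forall u, u \in s -> I u.1 /\ J u.2 by move=> u us; have [a b _] := hs u us.
have [N1 h1] : exists N, forall p, (N < p)%N -> forall u, u \in s -> prime p -> R p (u.1 / alpha).
  apply: list_large => u us; have [_ _ [r er]] := hs u us.
  have [N hN] := Zloc_large r; exists N => p Np pp.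
  by rewrite er mulrC (mulKf a0); apply: HRloc => //; apply: hN.
have [N2 h2] : exists N, forall p, prime p -> (N < p)%N -> loc p I alpha.
  apply: (GD_P gd (P := fun z => exists N, forall p, prime p -> (N < p)%N -> loc p I z)).
  - by exists 0%N => p pp _; apply: loc_incl => //; exact: (mod0 hM).
  - move=> x y [Nx hx] [Ny hy]; exists (maxn Nx Ny) => p pp; rewrite gtn_max => /andP [lx ly].
    by apply: (modD (loc_module pp hM)); [apply: hx|apply: hy].
  - move=> h z [Nz hz]; have [Nh hh] := Zloc_large h.
    exists (maxn Nh Nz) => p pp; rewrite gtn_max => /andP [lh lz].
    by apply: (modM (loc_module pp hM)); [apply: HRloc => //; apply: hh|apply: hz].
  - by move=> z Iz; exists 0%N => p pp _; apply: loc_incl.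
exists (maxn N1 N2) => p pp; rewrite gtn_max => /andP [l1 l2] z; split.
  move=> lz; exists (z / alpha); split; last by rewrite mulrC (divfK a0).
  have hN : moduleP (R p) (fun w => R p (w / alpha)).
    split.
    - by rewrite mul0r; exact: (S0 (ringR pp)).
    - by move=> x y hx hy; rewrite mulrDl; apply: HRD.
    - by move=> b x hb hx; rewrite -mulrA; apply: HRM.
  apply: (loc_in pp hN _ lz) => w Iw.
  have [Ew hw] := inv_gen hIJ hs' e Iw.
  rewrite Ew mulr_suml; apply: (mod_sum (S_module (ringR pp))) => u us.
  by rewrite -mulrA; apply: HRM => //; [apply: D_R => //; apply: hw|apply: h1].
move=> [y [Ry ->]]; rewrite mulrC; apply: (modM (loc_module pp hM)) => //.
exact: h2.
Qed.

Definition cst (c : rat) : F := tofrac (c%:P).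

Lemma cstM c d : cst (c * d) = cst c * cst d.
Proof. by rewrite /cst polyCM tofracM. Qed.

Lemma cst1 : cst 1 = 1.
Proof. by rewrite /cst polyC1 tofrac1. Qed.

Lemma cst_neq0 c : c != 0 -> cst c != 0.
Proof. by move=> c0; rewrite /cst tofrac_eq0 polyC_eq0. Qed.

Lemma cstV c : c != 0 -> cst c^-1 = (cst c)^-1.
Proof.
move=> c0; apply: (mulIf (cst_neq0 c0)); rewrite -cstM (mulVf c0) cst1 (mulVf (cst_neq0 c0)).
by [].
Qed.

Lemma poly_unit (u v : {poly rat}) : tofrac u * tofrac v = 1 -> exists c, c != 0 /\ tofrac u = cst c.
Proof.
move=> E.
have e : u * v = 1 by apply/eqP; rewrite -tofrac_eq tofracM E tofrac1 eqxx.
have un : u \is a GRing.unit by apply/unitrP; exists v; rewrite mulrC e.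
move: (un); rewrite poly_unitE => /andP [/eqP s1 _].
have eu : u = (u`_0)%:P by apply: size1_polyC; rewrite s1.
exists u`_0; split; last by rewrite /cst -eu.
apply/eqP => c0; move: e; rewrite eu c0 mul0r => /eqP; rewrite eq_sym oner_eq0.
by [].
Qed.

Definition unitR p (u : F) := [/\ R p u, R p u^-1 & u != 0].

Lemma unit_cst p r : prime p -> pfree p r -> unitR p (cst r).
Proof.
move=> pp pr; split.
- by apply: HRloc => //; apply: Zloc_pfree.
- by rewrite -cstV ?(pfree_nz pr) //; apply: HRloc => //; apply: Zloc_pfree; apply: pfreeV.
- exact/cst_neq0/(pfree_nz pr).
Qed.

Lemma unit_mul p u v : prime p -> unitR p u -> unitR p v -> unitR p (u * v).
Proof.
move=> pp [u1 u2 u3] [v1 v2 v3]; split.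
- exact: (HRM pp u1 v1).
- by rewrite invfM; apply: (HRM pp u2 v2).
- exact: (mulf_neq0 u3 v3).
Qed.

Lemma unit_inv p u : unitR p u -> unitR p u^-1.
Proof. by move=> [u1 u2 u3]; split; [exact: u2|rewrite invrK; exact: u1|rewrite invr_eq0; exact: u3]. Qed.

Lemma unit1 p : prime p -> unitR p 1.
Proof. by move=> pp; split; [exact: (S1 (ringR pp))|rewrite invr1; exact: (S1 (ringR pp))|exact: oner_neq0]. Qed.

Lemma unit_scale p M u : prime p -> moduleP (R p) M -> unitR p u ->
  forall z, M z <-> exists y, M y /\ z = u * y.
Proof.
move=> pp hM [u1 u2 u3] z; split.
  move=> Mz; exists (u^-1 * z); split; first exact: (modM hM).
  by rewrite mulVKf.
by move=> [y [My ->]]; apply: (modM hM).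
Qed.

Lemma const_ratio p I J aI aJ a : prime p -> invertible_ideal D I -> invertible_ideal D J ->
  GD D I aI -> GD D J aJ -> a != 0 ->
  (forall z, loc p I z <-> exists y, loc p J y /\ z = a * y) ->
  exists c, c != 0 /\ a * aJ / aI = cst c.
Proof.
move=> pp iI iJ gI gJ a0 ha.
have hI := frac_module iI.1; have hJ := frac_module iJ.1.
have aI0 := GD_nz gI; have aJ0 := GD_nz gJ.
have QI := GD_Q ringD polyD gI; have QJ := GD_Q ringD polyD gJ.
have locQJ y : loc p J y -> Qmod aJ y by apply: loc_in pp (Qmod_module aJ (polyR pp)) QJ.
have locQI y : loc p I y -> Qmod aI y by apply: loc_in pp (Qmod_module aI (polyR pp)) QI.
have aaJ : a * aJ != 0 by exact: (mulf_neq0 a0 aJ0).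
have [f1 e1] : exists f, a * aJ / aI = tofrac f.
  apply: (GD_P gJ (P := fun z => exists f, a * z / aI = tofrac f)).
  - by exists 0; rewrite mulr0 mul0r tofrac0.
  - by move=> x y [f ef] [g eg]; exists (f + g); rewrite tofracD -ef -eg mulrDr mulrDl.
  - by move=> h x [f ef]; exists (h * f); rewrite tofracM -ef mulrCA -!mulrA.
  - move=> z Jz; have : loc p I (a * z) by apply/ha; exists z; split => //; exact: loc_incl.
    by move/locQI => [f ef]; exists f; rewrite ef mulrC (mulKf aI0).
have [f2 e2] : exists f, aI / (a * aJ) = tofrac f.
  apply: (GD_P gI (P := fun z => exists f, z / (a * aJ) = tofrac f)).
  - by exists 0; rewrite mul0r tofrac0.
  - by move=> x y [k ek] [g eg]; exists (k + g); rewrite tofracD -ek -eg mulrDl.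
  - by move=> h x [k ek]; exists (h * k); rewrite tofracM -ek mulrA.
  - move=> z Iz; have := (loc_incl pp Iz); move/ha => [y [ly ->]].
    by have [k ek] := locQJ y ly; exists k; rewrite ek mulrA mulrC (mulKf aaJ).
have [c [c0 ec]] : exists c, c != 0 /\ tofrac f1 = cst c.
  by apply: (poly_unit (v := f2)); rewrite -e1 -e2 mulrA (divfK aI0) (mulfV aaJ).
by exists c; split; [exact: c0|rewrite e1].
Qed.

Lemma ppart_neq0 q r : prime q -> ppart q r != 0.
Proof.
move=> pq; rewrite /ppart; apply: mulf_neq0; last apply: invr_neq0;
  by rewrite pnatr_eq0 -lt0n expn_gt0 prime_gt0.
Qed.

Lemma unit_prod p (I : finType) (P : pred I) (g : I -> rat) : prime p ->
  (forall i, P i -> unitR p (cst (g i))) -> unitR p (cst (\prod_(i | P i) g i)).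
Proof.
move=> pp h; apply: (big_ind (fun x => unitR p (cst x))).
- by rewrite cst1; exact: unit1.
- by move=> x y ux uy; rewrite cstM; exact: unit_mul.
- exact: h.
Qed.


Lemma helper1 (u aI aJ y : F) : aJ != 0 -> u * (aI / aJ) * (aJ * y) = aI * (u * y).
Proof.
move=> aJ0; rewrite mulrA -(mulrA u) (divfK aJ0) (mulrC u aI) -mulrA.
by [].
Qed.

Lemma cond_equiv2 I J : invertible_ideal D I -> invertible_ideal D J ->
  (forall p, prime p -> ideal_equiv (loc p I) (loc p J)) -> ideal_equiv I J.
Proof.
move=> iI iJ h.
have [aI gI] := GD_ex ringD polyD iI.
have [aJ gJ] := GD_ex ringD polyD iJ.
have aI0 := GD_nz gI; have aJ0 := GD_nz gJ.
have hI := frac_module iI.1; have hJ := frac_module iJ.1.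
pose beta := aI / aJ.
have beta0 : beta != 0 by exact: (mulf_neq0 aI0 (invr_neq0 aJ0)).
have hc : forall p, exists c : rat, prime p -> c != 0 /\
    forall z, loc p I z <-> exists y, loc p J y /\ z = (cst c * beta) * y.
  move=> p; case pp: (prime p); last by exists 0.
  have [a a0 ha] := h p pp.
  have [c [c0 ec]] := const_ratio pp iI iJ gI gJ a0 ha.
  exists c => _; split; first exact: c0.
  have ea : a = cst c * beta by rewrite -ec /beta mulrA (divfK aI0) (mulfK aJ0).
  by rewrite -ea.
have [c hc'] := choice hc.
have [NI hNI] := GD_princ iI gI.
have [NJ hNJ] := GD_princ iJ gJ.
pose N := maxn NI NJ.
have cunit : forall p, prime p -> (N < p)%N -> unitR p (cst (c p)).
  move=> p pp; rewrite gtn_max => /andP [lI lJ].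
  have [c0 hcp] := hc' p pp.
  have u0 := cst_neq0 c0.
  have R1 := S1 (ringR pp).
  have locI1 : loc p I aI.
    by apply/(hNI p pp lI); exists 1; split; [exact: R1|rewrite mulr1].
  have locJ1 : loc p J aJ.
    by apply/(hNJ p pp lJ); exists 1; split; [exact: R1|rewrite mulr1].
  split; last exact: u0.
  - have : loc p I (cst (c p) * beta * aJ) by apply/hcp; exists aJ; split.
    have -> : cst (c p) * beta * aJ = aI * cst (c p).
      by rewrite /beta -mulrA (divfK aJ0) mulrC.
    move/(hNI p pp lI) => [y [Ry ey]].
    by have -> : cst (c p) = y by apply: (mulfI aI0).
  - move/hcp: locI1 => [y [/(hNJ p pp lJ) [y' [Ry' ey']] ey]].
    have e1 : cst (c p) * y' = 1.
      apply: (mulfI aI0); rewrite mulr1 -(@helper1 (cst (c p)) aI aJ y' aJ0).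
      by rewrite -ey'; exact: (esym ey).
    by have -> : (cst (c p))^-1 = y' by rewrite -[y'](mulKf u0) e1 mulr1.
pose P := \prod_(q < N.+1 | prime q) ppart q (c q).
have P0 : P != 0 by apply/prodf_neq0 => q pq; exact: ppart_neq0.
pose a := cst P * beta.
have a0 : a != 0 := mulf_neq0 (cst_neq0 P0) beta0.
have key : forall p, prime p -> forall z, loc p I z <-> exists y, loc p J y /\ z = a * y.
  move=> p pp z.
  have [c0 hcp] := hc' p pp.
  have vunit : unitR p (cst (P / c p)).
    case: (leqP p N) => pN.
    - rewrite /P (bigD1 (Ordinal (pN : (p < N.+1)%N))); last exact: pp.
      rewrite mulrAC cstM.
      apply: (unit_mul pp).
        apply: (unit_cst pp); rewrite -invf_div; apply: pfreeV.
        exact: pfree_div_ppart.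
      apply: (unit_prod pp) => q /andP [pq qj]; apply: (unit_cst pp); apply: pfree_ppart => //.
      apply: contra qj => /eqP e; apply/eqP; apply: val_inj; rewrite /= -e.
      by [].
    - rewrite mulrC cstM; apply: (unit_mul pp).
        rewrite (cstV c0).
        by apply: unit_inv; apply: cunit.
      apply: (unit_prod pp) => q pq; apply: (unit_cst pp); apply: pfree_ppart => //.
      by rewrite neq_ltn; apply/orP; right; apply: (leq_ltn_trans _ pN); rewrite -ltnS.
  have ea : a = (cst (c p) * beta) * cst (P / c p).
    by rewrite /a mulrAC -cstM [c p * _]mulrC (divfK c0).
  have hJp := loc_module pp hJ.
  rewrite hcp; split.
    move=> [y [ly ->]].
    have [y' [ly' ->]] := (unit_scale pp hJp vunit y).1 ly.
    by exists y'; split => //; rewrite ea mulrA.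
  move=> [y [ly ->]]; exists (cst (P / c p) * y); split; last by rewrite ea mulrA.
  by apply: (modM hJp) => //; case: vunit.
exists a; first exact: a0.
have haJ := mod_scale a hJ.
move=> z; split.
  move=> Iz; apply: (global haJ) => p pp.
  apply/(loc_scale (a := a) (M := fun w => exists y, J y /\ w = a * y) (N := J) pp (fun w => iff_refl _)).
  by apply/(key p pp); exact: loc_incl.
move=> [y [Jy ->]]; apply: (global hI) => p pp; apply/(key p pp).
by exists y; split => //; exact: loc_incl.
Qed.

Definition normP p (Js Np Lp : F -> Prop) (ap : F) (k k' : nat) :=
  [/\ ap != 0, (forall z, Js z <-> exists y, Np y /\ z = ap * y),
      moduleP (R p) Np /\ moduleP (R p) Lp, (forall z, ideal_mul Np Lp z <-> R p z) &
      Np (p ^ k)%N%:R /\ Lp (p ^ k')%N%:R].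

Lemma normalize_princ p Js : prime p -> principal_ideal (R p) Js ->
  exists ap, normP p Js (R p) (R p) ap 0 0.
Proof.
move=> pp [a a0 ha]; exists a; split.
- exact: a0.
- exact: ha.
- by split; exact: (S_module (ringR pp)).
- move=> z; split.
    by apply: imul_sub; [exact: (S0 (ringR pp))|exact: HRD|move=> u v; exact: HRM].
  by move=> Rz; rewrite -[z]mulr1; apply: imul_single => //; exact: (S1 (ringR pp)).
- by rewrite expn0; split; exact: (S1 (ringR pp)).
Qed.

Lemma strip_p p M e : prime p -> moduleP (R p) M -> (0 < e)%N -> M e%:R -> exists k, M (p ^ k)%N%:R.
Proof.
move=> pp hM e0 Me; have [m cm Em] := pfactor_coprime pp e0.
exists (logn p e).
have pm : ~~ (p %| m)%N by rewrite -prime_coprime.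
have m0 := F_nat_neq0 (ndiv_pos pm).
have Ee : (e%:R : F) = m%:R * (p ^ logn p e)%N%:R by rewrite -natrM -Em.
have -> : ((p ^ logn p e)%N%:R : F) = (m%:R)^-1 * e%:R by rewrite Ee (mulKf m0).
by apply: (modM hM); [exact: R_invn|exact: Me].
Qed.

Lemma normalize p Js : prime p -> invertible_ideal (R p) Js ->
  exists Np Lp ap k k', normP p Js Np Lp ap k k'.
Proof.
move=> pp iJs.
have [al gd] := GD_ex (ringR pp) (polyR pp) iJs.
have [al0 [J [s [fJ hIJ hs e hP]]]] := gd.
have hs' : forall u, u \in s -> Js u.1 /\ J u.2 by move=> u us; have [a b _] := hs u us.
have hJs := frac_module iJs.1; have hJ := frac_module fJ.
pose Np := fun z => Js (al * z).
pose Lp := fun z => J (al^-1 * z).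
have hNp : moduleP (R p) Np.
  split.
  - by rewrite /Np mulr0; exact: (mod0 hJs).
  - by move=> x y hx hy; rewrite /Np mulrDr; exact: (modD hJs).
  - by move=> a x ha hx; rewrite /Np mulrCA; exact: (modM hJs).
have hLp : moduleP (R p) Lp.
  split.
  - by rewrite /Lp mulr0; exact: (mod0 hJ).
  - by move=> x y hx hy; rewrite /Lp mulrDr; exact: (modD hJ).
  - by move=> a x ha hx; rewrite /Lp mulrCA; exact: (modM hJ).
have [e1 [e10 He1]] : exists e : nat, (0 < e)%N /\ Js (e%:R * al).
  apply: (GD_P gd (P := fun z => exists e : nat, (0 < e)%N /\ Js (e%:R * z))).
  - by exists 1%N; split => //; rewrite mulr0; exact: (mod0 hJs).
  - move=> x y [n1 [n10 h1]] [n2 [n20 h2]]; exists (n1 * n2)%N; split; first by rewrite muln_gt0 n10.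
    have -> : (n1 * n2)%N%:R * (x + y) = n2%:R * (n1%:R * x) + n1%:R * (n2%:R * y) by rewrite natrM; ring.
    by apply: (modD hJs); apply: (modnat (ringR pp) hJs).
  - move=> h z [n [n0 hz]]; have [m [m0 zm]] := clear_den h.
    exists (m * n)%N; split; first by rewrite muln_gt0 m0.
    have -> : (m * n)%N%:R * (tofrac h * z) = tofrac (m%:R *: h) * (n%:R * z).
      by rewrite tofrac_natZ natrM; ring.
    by apply: (modM hJs) => //; exact: RZ.
  - by move=> z Jz; exists 1%N; split => //; rewrite mul1r.
have [k Nk] : exists k, Np (p ^ k)%N%:R.
  apply: (strip_p pp hNp e10).
  by rewrite /Np mulrC.
have [e2 [e20 He2]] : exists e : nat, (0 < e)%N /\ forall u, u \in s -> R p (e%:R * (u.1 / al)).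
  apply: list_mult.
    by move=> n m u hu; rewrite natrM -mulrA; apply: HRM => //; exact: (Snat (ringR pp)).
  move=> u us; have [_ _ [r er]] := hs u us; have [m [m0 zm]] := clear_den r.
  exists m; split => //.
  by rewrite er [_ / al]mulrC (mulKf al0) -tofrac_natZ; exact: RZ.
have [k' Lk'] : exists k, Lp (p ^ k)%N%:R.
  apply: (strip_p pp hLp e20).
  rewrite /Lp; apply: (inv_colon hJ hs' e) => x Jx.
  have [Ex hx] := inv_gen hIJ hs' e Jx.
  rewrite Ex mulr_sumr; apply: (mod_sum (S_module (ringR pp))) => u us.
  have -> : al^-1 * e2%:R * (x * u.2 * u.1) = (x * u.2) * (e2%:R * (u.1 / al)) by ring.
  by apply: HRM => //; [exact: hx|exact: He2].
exists Np, Lp, al, k, k'; split.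
- exact: al0.
- move=> z; split.
    by move=> Jz; exists (al^-1 * z); split; [rewrite /Np (mulVKf al0)|rewrite (mulVKf al0)].
  by move=> [y [Ny ->]].
- by split.
- move=> z; split.
    apply: imul_sub; [exact: (S0 (ringR pp))|exact: HRD|].
    move=> u v Nu Lv; apply/hIJ.
    have -> : u * v = (al * u) * (al^-1 * v) by rewrite mulrACA (mulfV al0) mul1r.
    exact: imul_single.
  move=> Rz; rewrite -[z]mulr1; apply: (modM (imul_module Lp hNp)) => //.
  rewrite -e.
  have -> : \sum_(u <- s) u.1 * u.2 = \sum_(u <- s) (al^-1 * u.1) * (al * u.2).
    by apply: eq_bigr => u _; rewrite mulrACA (mulVf al0) mul1r.
  apply: imul_sum => u us; have [h1 h2] := hs' u us.
  by split; [rewrite /Np (mulVKf al0)|rewrite /Lp (mulKf al0)].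
- by split.
Qed.

Lemma tofracZ (c : rat) (g : {poly rat}) : tofrac (c *: g) = cst c * tofrac g.
Proof. by rewrite -mul_polyC tofracM. Qed.

Lemma ndiv_prod p N (P : pred 'I_N.+1) (g : 'I_N.+1 -> nat) : prime p ->
  (forall i, P i -> ~~ (p %| g i)%N) -> ~~ (p %| \prod_(i | P i) g i)%N.
Proof.
move=> pp h; apply: (big_ind (fun m => ~~ (p %| m)%N)).
- exact: ndiv1.
- by move=> x y hx hy; apply: ndiv_mul.
- exact: h.
Qed.

Lemma inter_loc (M : nat -> F -> Prop) (k k' : nat -> nat) N :
  (forall p, prime p -> moduleP (R p) (M p)) ->
  (forall p, prime p -> M p (p ^ k p)%N%:R) ->
  (forall p, prime p -> forall z, M p z -> R p ((p ^ k' p)%N%:R * z)) ->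
  (forall p, prime p -> (N < p)%N -> forall z, M p z <-> R p z) ->
  forall p, prime p -> forall z, loc p (fun w => forall q, prime q -> M q w) z <-> M p z.
Proof.
move=> hM hk hk' hN p pp z; split.
  by apply: (loc_in pp (hM p pp)) => w hw; apply: hw.
move=> Mz.
have [g eg] := HRpoly pp (hk' p pp z Mz).
have pk0 : ((p ^ k' p)%N%:R : F) != 0 by apply: F_nat_neq0; rewrite expn_gt0 prime_gt0.
have ez : z = tofrac ((((p ^ k' p)%N%:R : rat))^-1 *: g).
  rewrite tofracZ /cst tofrac_invn ?expn_gt0 ?prime_gt0 // -eg.
  by rewrite (mulKf pk0).
have [e [pe he]] := Zloc_pfree_part ((((p ^ k' p)%N%:R : rat))^-1 *: g) pp.
have Rez : forall q, prime q -> q != p -> R q (e%:R * z).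
  by move=> q pq qp; rewrite ez -tofrac_natZ; apply: HRloc => //; apply: he.
pose Pr := (\prod_(q < N.+1 | prime q && (nat_of_ord q != p)) (q ^ k q))%N.
exists (e * Pr)%N; split.
  apply: ndiv_mul => //; apply: ndiv_prod => // q /andP [pq qp].
  by rewrite Euclid_dvdX // dvdn_prime2 // eq_sym (negPf qp).
move=> q pq; case: (eqVneq q p) => [->|qp].
  by apply: (modnat (ringR pp) (hM p pp)).
case: (ltnP N q) => lt.
  apply/(hN q pq lt).
  have -> : (e * Pr)%N%:R * z = Pr%:R * (e%:R * z) by rewrite natrM; ring.
  by apply: HRM => //; [exact: (Snat (ringR pq))|exact: Rez].
have qP : prime (Ordinal (lt : (q < N.+1)%N)) && (Ordinal (lt : (q < N.+1)%N) != p :> nat).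
  by rewrite pq qp.
rewrite /Pr (bigD1 (Ordinal (lt : (q < N.+1)%N))); last exact: qP.
set Pr' := (\prod_(i | _) _)%N.
have -> : (e * (q ^ k q * Pr'))%N%:R * z = Pr'%:R * ((e%:R * z) * (q ^ k q)%N%:R).
  by rewrite !natrM; ring.
apply: (modnat (ringR pq) (hM q pq)); apply: (modM (hM q pq)); first exact: Rez.
exact: hk.
Qed.

Lemma frac_inter (M : nat -> F -> Prop) (k' : nat -> nat) N :
  (forall p, prime p -> moduleP (R p) (M p)) ->
  (forall p, prime p -> forall z, M p z -> R p ((p ^ k' p)%N%:R * z)) ->
  (forall p, prime p -> (N < p)%N -> forall z, M p z <-> R p z) ->
  frac_ideal D (fun w => forall q, prime q -> M q w).
Proof.
move=> hM hk' hN; split.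
- by move=> q pq; exact: (mod0 (hM q pq)).
- by move=> x y hx hy q pq; apply: (modD (hM q pq)); [apply: hx|apply: hy].
- by move=> a x Da hx q pq; apply: (modM (hM q pq)); [exact: D_R|apply: hx].
pose d := (\prod_(q < N.+1 | prime q) (q ^ k' q))%N.
have d0 : (0 < d)%N.
  rewrite /d; apply: (big_ind (fun m => (0 < m)%N)) => //.
    by move=> x y; rewrite muln_gt0 => -> ->.
  by move=> i pi; rewrite expn_gt0 prime_gt0.
exists d%:R; first by split; [exact: F_nat_neq0|exact: (Snat ringD)].
move=> x hx; apply/HD => q pq.
case: (ltnP N q) => lt.
  by apply: HRM => //; [exact: (Snat (ringR pq))|apply/(hN q pq lt); apply: hx].
rewrite /d (bigD1 (Ordinal (lt : (q < N.+1)%N))); last exact: pq.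
set d' := (\prod_(i | _) _)%N.
have -> : (q ^ k' q * d')%N%:R * x = d'%:R * ((q ^ k' q)%N%:R * x) by rewrite !natrM; ring.
by apply: HRM => //; [exact: (Snat (ringR pq))|apply: hk' => //; apply: hx].
Qed.

Lemma cond_surj (Js : nat -> F -> Prop) :
  (forall i, prime i -> invertible_ideal (R i) (Js i)) ->
  (exists N, forall i, prime i -> (N < i)%N -> principal_ideal (R i) (Js i)) ->
  exists2 I, invertible_ideal D I & forall i, prime i -> ideal_equiv (loc i I) (Js i).
Proof.
move=> hinv [N hN].
have hn : forall p, exists t : (F -> Prop) * (F -> Prop) * F * nat * nat, prime p ->
    normP p (Js p) t.1.1.1.1 t.1.1.1.2 t.1.1.2 t.1.2 t.2 /\
    ((N < p)%N -> (forall z, t.1.1.1.1 z <-> R p z) /\ (forall z, t.1.1.1.2 z <-> R p z)).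
  move=> p; case pp: (prime p); last by exists (R p, R p, 1, 0%N, 0%N).
  case: (ltnP N p) => lt.
    have [ap hap] := normalize_princ pp (hN p pp lt).
    by exists (R p, R p, ap, 0%N, 0%N) => _; split.
  have [Np [Lp [ap [k [k' hh]]]]] := normalize pp (hinv p pp).
  exists (Np, Lp, ap, k, k') => _; split => //.
have [t ht] := choice hn.
pose Nf p := (t p).1.1.1.1. pose Lf p := (t p).1.1.1.2. pose af p := (t p).1.1.2.
pose kf p := (t p).1.2. pose kf' p := (t p).2.
have hNm : forall p, prime p -> moduleP (R p) (Nf p).
  by move=> p pp; have [[_ _ [h _] _ _] _] := ht p pp.
have hLm : forall p, prime p -> moduleP (R p) (Lf p).
  by move=> p pp; have [[_ _ [_ h] _ _] _] := ht p pp.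
have hNL : forall p, prime p -> forall z, ideal_mul (Nf p) (Lf p) z <-> R p z.
  by move=> p pp; have [[_ _ _ h _] _] := ht p pp.
have hNk : forall p, prime p -> Nf p (p ^ kf p)%N%:R.
  by move=> p pp; have [[_ _ _ _ [h _]] _] := ht p pp.
have hLk : forall p, prime p -> Lf p (p ^ kf' p)%N%:R.
  by move=> p pp; have [[_ _ _ _ [_ h]] _] := ht p pp.
have hNN : forall p, prime p -> (N < p)%N -> forall z, Nf p z <-> R p z.
  by move=> p pp lt; have [_ /(_ lt) [h _]] := ht p pp.
have hLN : forall p, prime p -> (N < p)%N -> forall z, Lf p z <-> R p z.
  by move=> p pp lt; have [_ /(_ lt) [_ h]] := ht p pp.
have hNk' : forall p, prime p -> forall z, Nf p z -> R p ((p ^ kf' p)%N%:R * z).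
  by move=> p pp z Nz; apply/(hNL p pp); rewrite mulrC; apply: imul_single => //; exact: hLk.
have hLk' : forall p, prime p -> forall z, Lf p z -> R p ((p ^ kf p)%N%:R * z).
  by move=> p pp z Lz; apply/(hNL p pp); apply: imul_single => //; exact: hNk.
pose I := fun w => forall q, prime q -> Nf q w.
pose I' := fun w => forall q, prime q -> Lf q w.
have locI := inter_loc hNm hNk hNk' hNN.
have locI' := inter_loc hLm hLk hLk' hLN.
have fI : frac_ideal D I := frac_inter hNm hNk' hNN.
have fI' : frac_ideal D I' := frac_inter hLm hLk' hLN.
exists I.
  split; first exact: fI.
  exists I'; split; first exact: fI'.
  move=> z; split.
    apply: imul_sub; [exact: (S0 ringD)|exact: (SD ringD)|].
    move=> u v Iu Iv; apply/HD => q pq; apply/(hNL q pq); apply: imul_single.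
      exact: Iu.
    exact: Iv.
  move=> Dz; apply: (global (imul_module I' (frac_module fI))) => p pp.
  apply/(loc_mul pp (frac_module fI) (frac_module fI')).
  apply: (imul_mono (I := Nf p) (J := Lf p)).
  - by move=> w hw; apply/(locI p pp).
  - by move=> w hw; apply/(locI' p pp).
  by apply/(hNL p pp); exact: D_R.
move=> p pp; have [[a0 ha _ _ _] _] := ht p pp.
exists (af p)^-1; first exact: (invr_neq0 a0).
move=> z; rewrite (locI p pp); split.
  move=> Nz; exists (af p * z); split; last by rewrite (mulKf a0).
  by apply/ha; exists z.
move=> [y [/ha [w [Nw ->]] ->]]; by rewrite (mulKf a0).
Qed.

Theorem abstract_main : Pic_iso_direct_sum D (fun p => prime p) R.
Proof.
exists (fun I p => loc p I); split.
- by move=> I iI i pi; exact: cond_inv.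
- move=> I iI; have [a ga] := GD_ex ringD polyD iI; have [N hN] := GD_princ iI ga.
  exists N => i pi lt; exists a; first exact: (GD_nz ga).
  by move=> z; exact: hN.
- by move=> I J iI iJ i pi; exact: cond_mul.
- move=> I J iI iJ; split; last exact: cond_equiv2.
  by move=> h i pi; exact: cond_equiv1.
- by move=> Js hJs hN; exact: cond_surj.
Qed.
End Local.


Unset Implicit Arguments.

Theorem mainTheorem6
  (K : nat -> fieldType)
  (iota : forall p : nat, {rmorphism Zpadic p -> K p})
  (hK : forall p : nat, prime p -> is_alg_closure_Qp (iota p))
  (E : forall p : nat, K p -> Prop)
  (hE : forall p : nat, prime p -> forall a : K p, E p a -> in_Zp_bar (iota p) a) :
  Pic_iso_direct_sum (in_QX (IntQ_global iota E)) (fun p : nat => prime p)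
    (fun p : nat => in_QX (IntQ_at (iota p) (E p))).
Proof.
have inj : forall p, prime p -> injective (iota p) by move=> p pp; have [] := hK p pp.
apply: (@abstract_main (fun p : nat => in_QX (IntQ_at (iota p) (E p)))).
- move=> p pp x y [g Pg ->] [h Ph ->]; exists (g + h)%R.
    exact: (IntQ_atD pp (inj p pp) Pg Ph).
  by rewrite tofracD.
- move=> p pp x y [g Pg ->] [h Ph ->]; exists (g * h)%R.
    exact: (IntQ_atM pp (inj p pp) Pg Ph).
  by rewrite tofracM.
- by move=> p pp z [g _ ->]; exists g.
- move=> p pp g zl; exists g; last by [].
  exact: (IntQ_at_Zloc pp (inj p pp) (hE p pp) zl).
- move=> z; split.
    by move=> [g Pg ->] p pp; exists g; [exact: Pg p pp|].
  move=> h; have [g _ eg] := h 2%N isT; exists g; last exact: eg.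
  move=> p pp; have [g' Pg' eg'] := h p pp.
  have e : g = g' by apply/eqP; rewrite -tofrac_eq -eg -eg' eqxx.
  by rewrite e.
Qed.
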